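(* In the two-block setting, suppose Assumptions 1 and 2 hold; let $\boldsymbol{M}_1=\partial(f_1^*\circ(-B_1^* ))+c$, $\boldsymbol{M}_2=\partial(f_2^*\circ(-B_2^* ))$. Let $\{y^k,s^k\}_{k\ge1}$ be generated by Algorithm B from $y^0\in\operatorname{dom}f_1$, $x^0=\hat x^0\in\mathbb{X}$, $\sigma>0$, with limit $(y^*,s^* )$, and let $\{w^k,x^k,v^k,\eta^k\}_{k\ge1}$ be generated by Algorithm A from the same data (so $\eta^0=\hat x^0+\sigma(B_1y^0-c)$). Let $\eta^*:=\Pi_{\operatorname{Fix}(\mathbf{T}^{\rm PR}_\sigma)}(\eta^0)$ and $w^*:=\boldsymbol{J}_{\sigma\boldsymbol{M}_2}(\eta^* )$. Then for all $k\ge0$: $$4\sigma h(y^{k+1},s^{k+1})=-4\sigma\big(d_{f_1}(x^{k+1})+d_{f_2}(w^{k+1})-d_{f_1}(w^* )-d_{f_2}(w^* )\big)+\|\eta^k-v^{k+1}\|^2+2\langle\eta^k-v^{k+1},v^{k+1}\rangle,$$ $$4\sigma h(y^{k+1},s^{k+1})\le\|\eta^k-(\eta^*-w^* )\|^2-\|v^{k+1}-(\eta^*-w^* )\|^2,$$ $$h(y^{k+1},s^{k+1})\ge\langle B_1y^{k+1}+B_2s^{k+1}-c,\,-w^*\rangle.$$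
   Context: Two-block setting: $\mathbb{X},\mathbb{Y},\mathbb{Z}$ are finite-dimensional real Euclidean spaces; $f_1:\mathbb{Y}\to(-\infty,+\infty]$, $f_2:\mathbb{Z}\to(-\infty,+\infty]$ proper closed convex; $B_1:\mathbb{Y}\to\mathbb{X}$, $B_2:\mathbb{Z}\to\mathbb{X}$ linear; $c\in\mathbb{X}$. Problem (P): $\min f_1(y)+f_2(s)$ s.t. $B_1y+B_2s=c$. Dual (D): $\max_x\{-f_1^*(-B_1^*x)-f_2^*(-B_2^*x)-\langle c,x\rangle\}$. $L_\sigma(y,s;x):=f_1(y)+f_2(s)+\langle x,B_1y+B_2s-c\rangle+\frac{\sigma}{2}\|B_1y+B_2s-c\|^2$. $\Sigma_{f_1}$ (resp. $\Sigma_{f_2}$) is a self-adjoint positive semidefinite operator with $f_1(y)\ge f_1(\hat y)+\langle\hat\phi,y-\hat y\rangle+\frac12\|y-\hat y\|^2_{\Sigma_{f_1}}$ and $\langle\phi-\hat\phi,y-\hat y\rangle\ge\|y-\hat y\|^2_{\Sigma_{f_1}}$ for all $y,\hat y\in\operatorname{dom}f_1$, $\phi\in\partial f_1(y)$, $\hat\phi\in\partial f_1(\hat y)$ (same for $f_2$). Assumption 1: for $i=1,2$, $\operatorname{ri}(\operatorname{dom}f_i^* )\cap\operatorname{Range}(B_i^* )\ne\emptyset$; $\operatorname{ri}(\operatorname{dom}(f_1^*\circ(-B_1^* )))\cap\operatorname{ri}(\operatorname{dom}(f_2^*\circ(-B_2^* )))\ne\emptyset$; (P) has a solution. Assumption 2: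 $\Sigma_{f_1}+B_1^*B_1$ and $\Sigma_{f_2}+B_2^*B_2$ are positive definite. $\boldsymbol{J}_{\boldsymbol{M}}=(\boldsymbol{I}+\boldsymbol{M})^{-1}$, $\boldsymbol{R}_{\boldsymbol{M}}=2\boldsymbol{J}_{\boldsymbol{M}}-\boldsymbol{I}$, $\mathbf{T}^{\rm PR}_\sigma=\boldsymbol{R}_{\sigma\boldsymbol{M}_1}\circ\boldsymbol{R}_{\sigma\boldsymbol{M}_2}$; $\Pi$ is Euclidean projection, $\operatorname{Fix}$ the fixed-point set. $h(y,s):=f_1(y)+f_2(s)-f_1(y^* )-f_2(s^* )$; $d_{f_1}(w):=f_1^*(-B_1^*w)+\langle w,c\rangle$, $d_{f_2}(w):=f_2^*(-B_2^*w)$. Algorithm A: input $y^0,x^0,\sigma$; $\hat x^0:=x^0$, $\eta^0:=\hat x^0+\sigma(B_1y^0-c)$; for $k\ge0$: $s^{k+1}=\arg\min_s\{f_2(s)+\langle\eta^k,B_2s\rangle+\frac\sigma2\|B_2s\|^2\}$; $w^{k+1}=\eta^k+\sigma B_2s^{k+1}$; $y^{k+1}=\arg\min_y\{f_1(y)+\langle\eta^k+2\sigma B_2s^{k+1},B_1y-c\rangle+\frac\sigma2\|B_1y-c\|^2\}$; $x^{k+1}=\eta^k+\sigma(B_1y^{k+1}-c)+2\sigma B_2s^{k+1}$; $v^{k+1}=\eta^k+2\sigma(B_1y^{k+1}+B_2s^{k+1}-c)$; $\eta^{k+1}=\frac{1}{k+2}\eta^0+\frac{k+1}{k+2}v^{k+1}$.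 Algorithm B: input $y^0,x^0,\sigma$; $\hat x^0:=x^0$; for $k\ge0$: $s^{k+1}=\arg\min_s L_\sigma(y^k,s;\hat x^k)$; $x^{k+1/2}=\hat x^k+\sigma(B_1y^k+B_2s^{k+1}-c)$; $y^{k+1}=\arg\min_y L_\sigma(y,s^{k+1};x^{k+1/2})$; $x^{k+1}=x^{k+1/2}+\sigma(B_1y^{k+1}+B_2s^{k+1}-c)$; $\hat x^{k+1}=\frac{1}{k+2}\hat x^0+\frac{k+1}{k+2}x^{k+1}+\frac{\sigma}{k+2}[(B_1y^0-c)-(B_1y^{k+1}-c)]$. (Algorithms A and B produce the same $\{s^k,y^k,x^k\}$.) *)

(* Defs.v *)
(* R : realType, Euclidean spaces X,Y,Z modelled as column
   vectors 'cV[R]_n with the standard inner product; linear maps as matrices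
   (adjoint = transpose); extended-valued functions take values in \bar R. *)
From HB Require Import structures.
From mathcomp Require Import all_boot all_order all_algebra.
Import Order.TTheory GRing.Theory Num.Theory.
From mathcomp Require Import boolp classical_sets reals constructive_ereal ereal.
Set Implicit Arguments. Unset Strict Implicit. Unset Printing Implicit Defensive.
Local Open Scope ring_scope.
Local Open Scope classical_set_scope.

Definition ip {R : realType} {n : nat} (u v : 'cV[R]_n) : R :=
  \sum_(i < n) u i 0 * v i 0.
Definition sqnorm {R : realType} {n : nat} (u : 'cV[R]_n) : R := ip u u.
Definition enorm {R : realType} {n : nat} (u : 'cV[R]_n) : R :=
  Num.sqrt (sqnorm u).

Definition dom {R : realType} {n : nat} (f : 'cV[R]_n -> \bar R) :
  set 'cV[R]_n := [set x | (f x < +oo)%E].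

Definition properf {R : realType} {n : nat} (f : 'cV[R]_n -> \bar R) :=
  (forall x, (-oo < f x)%E) /\ exists x, (f x < +oo)%E.
Definition convexf {R : realType} {n : nat} (f : 'cV[R]_n -> \bar R) :=
  forall (x y : 'cV[R]_n) (t : R), 0 < t < 1 ->
    (f (t *: x + (1 - t) *: y)%R <= t%:E * f x + (1 - t)%:E * f y)%E.
(* closed = lower semicontinuous *)
Definition lscf {R : realType} {n : nat} (f : 'cV[R]_n -> \bar R) :=
  forall x (a : R), (a%:E < f x)%E ->
    exists2 d : R, 0 < d & forall z, enorm (z - x) < d -> (a%:E < f z)%E.
Definition proper_closed_convex {R : realType} {n : nat}
  (f : 'cV[R]_n -> \bar R) := properf f /\ convexf f /\ lscf f.

Definition fconj {R : realType} {n : nat} (f : 'cV[R]_n -> \bar R)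
  (u : 'cV[R]_n) : \bar R :=
  ereal_sup [set ((ip u y)%:E - f y)%E | y in [set: 'cV[R]_n]].

Definition subdiff {R : realType} {n : nat} (f : 'cV[R]_n -> \bar R)
  (x : 'cV[R]_n) : set 'cV[R]_n :=
  [set phi | f x \is a fin_num /\
             forall z, (f x + (ip phi (z - x))%:E <= f z)%E].

Definition affine_hull {R : realType} {n : nat} (C : set 'cV[R]_n) :
  set 'cV[R]_n :=
  [set z | exists m (p : 'I_m -> 'cV[R]_n) (a : 'I_m -> R),
     (forall i, C (p i)) /\ \sum_(i < m) a i = 1 /\
     z = \sum_(i < m) a i *: p i].
Definition ri {R : realType} {n : nat} (C : set 'cV[R]_n) : set 'cV[R]_n :=
  [set x | C x /\ exists2 e : R, 0 < e &
     forall z, affine_hull C z -> enorm (z - x) < e -> C z].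

Definition is_proj {R : realType} {n : nat} (C : set 'cV[R]_n)
  (x p : 'cV[R]_n) :=
  C p /\ forall z, C z -> sqnorm (x - p) <= sqnorm (x - z).

(* w = J_{sigma M}(eta) = (I + sigma M)^{-1}(eta), i.e. eta in w + sigma M(w);
   M is a set-valued operator *)
Definition is_resolvent {R : realType} {n : nat}
  (M : 'cV[R]_n -> set 'cV[R]_n) (sigma : R) (eta w : 'cV[R]_n) :=
  exists2 u, M w u & eta = w + sigma *: u.

(* eta in Fix(R_{sigma M1} o R_{sigma M2}), with R_M = 2 J_M - I *)
Definition fix_PR {R : realType} {n : nat}
  (M1 M2 : 'cV[R]_n -> set 'cV[R]_n) (sigma : R) (eta : 'cV[R]_n) :=
  exists w2 w1, is_resolvent M2 sigma eta w2 /\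
     is_resolvent M1 sigma (2%:R *: w2 - eta) w1 /\
     2%:R *: w1 - (2%:R *: w2 - eta) = eta.

Definition is_argmin {T} {R : realType} (F : T -> \bar R) (x : T) :=
  forall z, (F x <= F z)%E.

Definition cvg_vec {R : realType} {n : nat} (u : nat -> 'cV[R]_n)
  (l : 'cV[R]_n) :=
  forall e : R, 0 < e -> exists N, forall k, (N <= k)%N -> enorm (u k - l) < e.

Definition pos_def {R : realType} {n : nat} (A : 'M[R]_n) :=
  forall y : 'cV[R]_n, y != 0 -> 0 < ip y (A *m y).

Definition is_sigma_mod {R : realType} {n : nat} (f : 'cV[R]_n -> \bar R)
  (Sig : 'M[R]_n) :=
  Sig^T = Sig /\ (forall y, 0 <= ip y (Sig *m y)) /\
  (forall y yh phih, dom f y -> dom f yh -> subdiff f yh phih ->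
     (f yh + (ip phih (y - yh))%:E
        + (2%:R^-1 * ip (y - yh) (Sig *m (y - yh)))%:E <= f y)%E) /\
  (forall y yh phi phih, dom f y -> dom f yh -> subdiff f y phi ->
     subdiff f yh phih ->
     ip (y - yh) (Sig *m (y - yh)) <= ip (phi - phih) (y - yh)).

Section TwoBlock.
Context {R : realType} {nx ny nz : nat}.
Definition is_solution_P (f1 : 'cV[R]_ny -> \bar R) (f2 : 'cV[R]_nz -> \bar R) (B1 : 'M[R]_(nx, ny)) (B2 : 'M[R]_(nx, nz)) (c : 'cV[R]_nx)(y : 'cV[R]_ny) (s : 'cV[R]_nz) :=
  B1 *m y + B2 *m s = c /\ (f1 y + f2 s < +oo)%E /\
  forall y' s', B1 *m y' + B2 *m s' = c -> (f1 y + f2 s <= f1 y' + f2 s')%E.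

Definition conjB1 (f1 : 'cV[R]_ny -> \bar R) (B1 : 'M[R]_(nx, ny))(w : 'cV[R]_nx) := fconj f1 (- (B1^T *m w)).
Definition conjB2 (f2 : 'cV[R]_nz -> \bar R) (B2 : 'M[R]_(nx, nz))(w : 'cV[R]_nx) := fconj f2 (- (B2^T *m w)).

Definition Assumption1 (f1 : 'cV[R]_ny -> \bar R) (f2 : 'cV[R]_nz -> \bar R) (B1 : 'M[R]_(nx, ny)) (B2 : 'M[R]_(nx, nz)) (c : 'cV[R]_nx):=
  (ri (dom (fconj f1)) `&` [set B1^T *m x | x in [set: 'cV[R]_nx]] <> set0) /\
  (ri (dom (fconj f2)) `&` [set B2^T *m x | x in [set: 'cV[R]_nx]] <> set0) /\
  (ri (dom (conjB1 f1 B1)) `&` ri (dom (conjB2 f2 B2)) <> set0) /\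
  (exists y s, is_solution_P f1 f2 B1 B2 c y s).

Definition Assumption2 (B1 : 'M[R]_(nx, ny)) (B2 : 'M[R]_(nx, nz))(Sig1 : 'M[R]_ny) (Sig2 : 'M[R]_nz) :=
  pos_def (Sig1 + B1^T *m B1) /\ pos_def (Sig2 + B2^T *m B2).

Definition M1op (f1 : 'cV[R]_ny -> \bar R) (B1 : 'M[R]_(nx, ny)) (c : 'cV[R]_nx)(w : 'cV[R]_nx) : set 'cV[R]_nx :=
  [set u + c | u in subdiff (conjB1 f1 B1) w].
Definition M2op (f2 : 'cV[R]_nz -> \bar R) (B2 : 'M[R]_(nx, nz))(w : 'cV[R]_nx) : set 'cV[R]_nx :=
  subdiff (conjB2 f2 B2) w.

Definition d_f1 (f1 : 'cV[R]_ny -> \bar R) (B1 : 'M[R]_(nx, ny)) (c : 'cV[R]_nx)(w : 'cV[R]_nx) : \bar R :=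
  (conjB1 f1 B1 w + (ip w c)%:E)%E.
Definition d_f2 (f2 : 'cV[R]_nz -> \bar R) (B2 : 'M[R]_(nx, nz))(w : 'cV[R]_nx) : \bar R := conjB2 f2 B2 w.

Definition Lsig (f1 : 'cV[R]_ny -> \bar R) (f2 : 'cV[R]_nz -> \bar R) (B1 : 'M[R]_(nx, ny)) (B2 : 'M[R]_(nx, nz)) (c : 'cV[R]_nx)(sigma : R) (y : 'cV[R]_ny) (s : 'cV[R]_nz)
  (x : 'cV[R]_nx) : \bar R :=
  let r := B1 *m y + B2 *m s - c in
  (f1 y + f2 s + (ip x r + sigma / 2%:R * sqnorm r)%:E)%E.

(* Algorithm B, with xh k = \hat x^k and xhalf k = x^{k+1/2} *)
Definition AlgorithmB (f1 : 'cV[R]_ny -> \bar R) (f2 : 'cV[R]_nz -> \bar R) (B1 : 'M[R]_(nx, ny)) (B2 : 'M[R]_(nx, nz)) (c : 'cV[R]_nx)(y0 : 'cV[R]_ny) (x0 : 'cV[R]_nx)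
  (sigma : R) (y : nat -> 'cV[R]_ny) (s : nat -> 'cV[R]_nz)
  (x xh xhalf : nat -> 'cV[R]_nx) :=
  y 0%N = y0 /\ x 0%N = x0 /\ xh 0%N = x0 /\
  forall k : nat,
    is_argmin (fun s' => Lsig f1 f2 B1 B2 c sigma (y k) s' (xh k)) (s k.+1) /\
    xhalf k = xh k + sigma *: (B1 *m y k + B2 *m s k.+1 - c) /\
    is_argmin (fun y' => Lsig f1 f2 B1 B2 c sigma y' (s k.+1) (xhalf k))
      (y k.+1) /\
    x k.+1 = xhalf k + sigma *: (B1 *m y k.+1 + B2 *m s k.+1 - c) /\
    xh k.+1 = (k.+2%:R)^-1 *: xh 0%N + (k.+1%:R / k.+2%:R) *: x k.+1
              + (sigma / k.+2%:R) *: ((B1 *m y0 - c) - (B1 *m y k.+1 - c)).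

Definition AlgorithmA (f1 : 'cV[R]_ny -> \bar R) (f2 : 'cV[R]_nz -> \bar R) (B1 : 'M[R]_(nx, ny)) (B2 : 'M[R]_(nx, nz)) (c : 'cV[R]_nx)(y0 : 'cV[R]_ny) (x0 : 'cV[R]_nx)
  (sigma : R) (s : nat -> 'cV[R]_nz) (y : nat -> 'cV[R]_ny)
  (w x v eta : nat -> 'cV[R]_nx) :=
  y 0%N = y0 /\ x 0%N = x0 /\
  eta 0%N = x0 + sigma *: (B1 *m y0 - c) /\
  forall k : nat,
    is_argmin (fun s' => (f2 s' + (ip (eta k) (B2 *m s')
                    + sigma / 2%:R * sqnorm (B2 *m s'))%:E)%E) (s k.+1) /\
    w k.+1 = eta k + sigma *: (B2 *m s k.+1) /\
    is_argmin (fun y' => (f1 y' +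
        (ip (eta k + (2%:R * sigma) *: (B2 *m s k.+1)) (B1 *m y' - c)
         + sigma / 2%:R * sqnorm (B1 *m y' - c))%:E)%E) (y k.+1) /\
    x k.+1 = eta k + sigma *: (B1 *m y k.+1 - c)
             + (2%:R * sigma) *: (B2 *m s k.+1) /\
    v k.+1 = eta k + (2%:R * sigma) *: (B1 *m y k.+1 + B2 *m s k.+1 - c) /\
    eta k.+1 = (k.+2%:R)^-1 *: eta 0%N + (k.+1%:R / k.+2%:R) *: v k.+1.

Definition hfun (f1 : 'cV[R]_ny -> \bar R) (f2 : 'cV[R]_nz -> \bar R)(ystar : 'cV[R]_ny) (sstar : 'cV[R]_nz)
  (y : 'cV[R]_ny) (s : 'cV[R]_nz) : \bar R :=
  (f1 y + f2 s - f1 ystar - f2 sstar)%E.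

End TwoBlock.

(* Main.v *)
Require Import Defs.
From HB Require Import structures.
From mathcomp Require Import all_boot all_order all_algebra.
Import Order.TTheory GRing.Theory Num.Theory.
From mathcomp Require Import boolp classical_sets reals constructive_ereal ereal.
From mathcomp Require Import ring lra.
Local Open Scope ring_scope.
Local Open Scope classical_set_scope.
Section IP.
Context {R : realType} {n : nat}.
Implicit Types u v w : 'cV[R]_n.

Lemma ipC u v : ip u v = ip v u.
Proof. by apply: eq_bigr => i _; rewrite mulrC. Qed.
Lemma ipDl u v w : ip (u + v) w = ip u w + ip v w.
Proof. by rewrite /ip -big_split; apply: eq_bigr => i _; rewrite mxE mulrDl. Qed.
Lemma ipZl a u v : ip (a *: u) v = a * ip u v.
Proof. by rewrite /ip mulr_sumr; apply: eq_bigr => i _; rewrite mxE mulrA. Qed.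
Lemma ipNl u v : ip (- u) v = - ip u v.
Proof. by rewrite -scaleN1r ipZl mulN1r. Qed.
Lemma ipBl u v w : ip (u - v) w = ip u w - ip v w.
Proof. by rewrite ipDl ipNl. Qed.
Lemma ipDr u v w : ip w (u + v) = ip w u + ip w v.
Proof. by rewrite ipC ipDl !(ipC w). Qed.
Lemma ipZr a u v : ip v (a *: u) = a * ip v u.
Proof. by rewrite ipC ipZl ipC. Qed.
Lemma ipNr u v : ip v (- u) = - ip v u.
Proof. by rewrite ipC ipNl ipC. Qed.
Lemma ipBr u v w : ip w (u - v) = ip w u - ip w v.
Proof. by rewrite ipDr ipNr. Qed.
Lemma ip0l u : ip 0 u = 0.
Proof. by rewrite /ip big1 // => i _; rewrite mxE mul0r. Qed.
Lemma ip0r u : ip u 0 = 0.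
Proof. by rewrite ipC ip0l. Qed.
Lemma sqnorm_ge0 u : 0 <= sqnorm u.
Proof. by rewrite /sqnorm /ip sumr_ge0 // => i _; rewrite -expr2 sqr_ge0. Qed.
Lemma sqnorm_eq0 u : sqnorm u = 0 -> u = 0.
Proof.
move=> H; apply/matrixP => i j; rewrite (ord1 j) mxE.
have H' : \sum_(i < n) (u i 0) ^+ 2 = 0.
  by rewrite -[RHS]H /sqnorm /ip; apply: eq_bigr => k _; rewrite expr2.
have Hi : u i 0 ^+ 2 = 0.
  by apply: (psumr_eq0P _ H') => // k _; exact: sqr_ge0.
by move/eqP: Hi; rewrite sqrf_eq0 => /eqP.
Qed.
Lemma sqnormD u v : sqnorm (u + v) = sqnorm u + 2 * ip u v + sqnorm v.
Proof. rewrite /sqnorm ipDl !ipDr (ipC v u); lra. Qed.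
Lemma sqnormB u v : sqnorm (u - v) = sqnorm u - 2 * ip u v + sqnorm v.
Proof. rewrite /sqnorm ipDl !ipDr !ipNl !ipNr (ipC v u); lra. Qed.
Lemma sqnormZ a u : sqnorm (a *: u) = a ^+ 2 * sqnorm u.
Proof. by rewrite /sqnorm ipZl ipZr mulrA expr2. Qed.

Lemma ip2_le u v : 2 * ip u v <= sqnorm u + sqnorm v.
Proof. have := sqnorm_ge0 (u - v); rewrite sqnormB; lra. Qed.
Lemma ip2_ge u v : - (sqnorm u + sqnorm v) <= 2 * ip u v.
Proof. have := sqnorm_ge0 (u + v); rewrite sqnormD; lra. Qed.

Lemma CS u v : ip u v ^+ 2 <= sqnorm u * sqnorm v.
Proof.
have [H0|Hp] := eqVneq (sqnorm u) 0.
  by rewrite H0 (sqnorm_eq0 _ H0) ip0l expr0n /= mul0r.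
have hp : 0 < sqnorm u by rewrite lt_def Hp sqnorm_ge0.
have := sqnorm_ge0 (sqnorm u *: v - ip u v *: u).
rewrite sqnormB sqnormZ sqnormZ ipZl ipZr (ipC v u) => H.
have : 0 <= sqnorm u * (sqnorm u * sqnorm v - ip u v ^+ 2).
  move: H; rewrite -/(sqnorm u); nra.
by rewrite pmulr_rge0 // subr_ge0.
Qed.

Lemma cvg_sq (u : nat -> 'cV[R]_n) l : cvg_vec u l ->
  forall d : R, 0 < d -> exists N, forall k, (N <= k)%N -> sqnorm (u k - l) < d.
Proof.
move=> H d d0; have [N HN] := H (Num.sqrt d) (ltac:(by rewrite sqrtr_gt0)) .
by exists N => k /HN; rewrite /enorm ltr_sqrt.
Qed.
End IP.

Lemma ip_mul {R : realType} {m n : nat} (A : 'M[R]_(m, n)) (u : 'cV[R]_n) (v : 'cV[R]_m) :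
  ip (A *m u) v = ip u (A^T *m v).
Proof.
rewrite /ip.
under eq_bigr do rewrite mxE big_distrl /=.
rewrite exchange_big /=; apply: eq_bigr => j _.
rewrite mxE big_distrr /=; apply: eq_bigr => i _; rewrite mxE; ring.
Qed.

Set Implicit Arguments. Unset Strict Implicit.
Lemma mx_bound {R : realType} {m n : nat} (A : 'M[R]_(m, n)) (d : 'cV[R]_n) :
  sqnorm (A *m d) <= (\sum_(i < m) sqnorm ((row i A)^T)) * sqnorm d.
Proof.
rewrite /sqnorm {1}/ip big_distrl /=; apply: ler_sum => i _.
have -> : (A *m d) i 0 = ip ((row i A)^T) d.
  by rewrite mxE /ip; apply: eq_bigr => j _; rewrite !mxE.
by rewrite -expr2 CS.
Qed.

Lemma real_lim0 {R : realType} (X K : R) : 0 <= K ->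
  (forall t, 0 < t < 1 -> - (t * K) <= X) -> 0 <= X.
Proof.
move=> K0 H; rewrite leNgt; apply/negP => X0.
have KX : 0 < K - X by lra.
pose t := (- X) / (2 * (K - X)).
have t0 : 0 < t by rewrite /t divr_gt0 // ?mulr_gt0; lra.
have tK : t * (2 * (K - X)) = - X by rewrite /t mulfVK //; apply/lt0r_neq0; lra.
have t1 : t < 1.
  have : t * (2 * (K - X)) < 1 * (2 * (K - X)) by rewrite tK; lra.
  by rewrite ltr_pM2r //; lra.
have := H t; rewrite t0 t1 => /(_ isT).
nra.
Qed.

Section Conv.
Context {R : realType}.
Local Open Scope ereal_scope.

Lemma fconj_lb {n} (f : 'cV[R]_n -> \bar R) phi z :
  (ip phi z)%:E - f z <= fconj f phi.
Proof. by apply: ereal_sup_ubound; exists z. Qed.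

Lemma fconj_sub {n} (f : 'cV[R]_n -> \bar R) y phi :
  subdiff f y phi -> fconj f phi = (ip phi y)%:E - f y.
Proof.
move=> [fy H]; apply/eqP; rewrite eq_le fconj_lb andbT.
apply: ge_ereal_sup => _ [z _ <-].
move: (H z); have [Fy ->] : exists Fy : R, f y = Fy%:E.
  by move: fy; case: (f y) => // r _; exists r.
case: (f z) => [Fz||] /=.
- rewrite -EFinD lee_fin -!EFinB lee_fin ipBr; lra.
- by move=> _; rewrite addeNy leNye.
- by rewrite leeNy_eq.
Qed.

Lemma finR (x : \bar R) : x \is a fin_num -> exists r : R, x = r%:E.
Proof. by case: x => // r _; exists r. Qed.

Lemma subdiff_mono {n} (g : 'cV[R]_n -> \bar R) w w' u u' :
  subdiff g w u -> subdiff g w' u' -> (0 <= ip (u - u') (w - w'))%R.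
Proof.
move=> [f1 H1] [f2 H2].
have [a ea] := finR f1; have [b eb] := finR f2.
move: (H1 w') (H2 w); rewrite ea eb -!EFinD !lee_fin ipBl !ipBr.
rewrite (ipC u' w') (ipC u w') (ipC u w) (ipC u' w); lra.
Qed.

Lemma resolvent_uniq {n} (g : 'cV[R]_n -> \bar R) (sigma : R) eta w w' :
  (0 < sigma)%R -> is_resolvent (subdiff g) sigma eta w ->
  is_resolvent (subdiff g) sigma eta w' -> w = w'.
Proof.
move=> s0 [u Hu e1] [u' Hu' e2].
have := subdiff_mono Hu Hu'.
have -> : (w - w' = sigma *: (u' - u))%R.
  have e : (w = w' + sigma *: u' - sigma *: u)%R by rewrite -e2 e1 addrK.
  by rewrite e scalerBr addrAC addrC addrAC subrr add0r addrC.
rewrite ipZr (_ : ip (u - u') (u' - u) = - sqnorm (u - u'))%R; last first.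
  by rewrite /sqnorm -ipNr opprB.
rewrite pmulr_rge0 // oppr_ge0 => H.
have /sqnorm_eq0 /eqP : sqnorm (u - u') = 0%R.
  by apply/eqP; rewrite eq_le H sqnorm_ge0.
rewrite subr_eq0 => /eqP equ.
by move: e1; rewrite e2 equ => /addIr.
Qed.

Lemma argmin_sub {m k} (f : 'cV[R]_m -> \bar R) (M : 'M[R]_(k, m))
  (p q : 'cV[R]_k) (kap : R) y :
  convexf f -> (forall x, -oo < f x) -> f y \is a fin_num -> (0 <= kap)%R ->
  (forall z, f y + (ip p (M *m y + q) + kap * sqnorm (M *m y + q))%:E <=
             f z + (ip p (M *m z + q) + kap * sqnorm (M *m z + q))%:E) ->
  subdiff f y (- (M^T *m (p + (2 * kap) *: (M *m y + q))))%R.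
Proof.
move=> cf hinf fy k0 Hmin; split => // z.
have [Fy eFy] := finR fy; rewrite eFy.
case ez: (f z) => [Fz | | ]; last by have := hinf z; rewrite ez.
  2: by rewrite leey.
rewrite -EFinD lee_fin ipNl ip_mul trmxK ipDl ipZl.
set e := (M *m y + q)%R; set h := (M *m (z - y))%R.
suff : (0 <= Fz - Fy + (ip p h + 2 * kap * ip e h))%R by lra.
apply: (@real_lim0 _ _ (kap * sqnorm h)); first by rewrite mulr_ge0 // sqnorm_ge0.
move=> t /andP[t0 t1].
set zt := (t *: z + (1 - t) *: y)%R.
have cz := cf z y t; rewrite t0 t1 /= in cz; have {cz} cz := cz isT.
rewrite ez eFy -!EFinM -EFinD in cz.
have := hinf zt; case ezt: (f zt) => [Ft | | ] // _; last by rewrite ezt leye_eq in cz.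
rewrite ezt lee_fin in cz.
have := Hmin zt; rewrite eFy ezt -!EFinD lee_fin.
have -> : (M *m zt + q = e + t *: h)%R.
  rewrite /zt /e /h mulmxDr mulmxBr -!scalemxAr.
  by apply/matrixP => i j; rewrite !mxE; ring.
rewrite -/e (ipDr e (t *: h)) (sqnormD e) sqnormZ !ipZr => Hm.
have sh := sqnorm_ge0 h.
have : (0 <= t * (Fz - Fy + (ip p h + 2 * kap * ip e h) + t * (kap * sqnorm h)))%R.
  nra.
rewrite pmulr_rge0 //; lra.
Qed.

Lemma conj_chain {m k} (f : 'cV[R]_m -> \bar R) (B : 'M[R]_(k, m)) w s :
  subdiff f s (- (B^T *m w))%R ->
  subdiff (fun u => fconj f (- (B^T *m u))%R) w (- (B *m s))%R.
Proof.
move=> Hs; have E := fconj_sub Hs; have [fs _] := Hs; have [F eF] := finR fs.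
split; first by rewrite E eF -EFinB.
move=> z; rewrite E eF -EFinB -EFinD; apply: le_trans (fconj_lb _ _ s).
rewrite eF -EFinB lee_fin !ipNl (ip_mul B s) mulmxBr ipBr !(ipC s); lra.
Qed.

Lemma argmin_uniq {m k} (f : 'cV[R]_m -> \bar R) (Sig : 'M[R]_m)
  (B : 'M[R]_(k, m)) (sig : R) (p q : 'cV[R]_k) s1 s2 :
  is_sigma_mod f Sig -> pos_def (Sig + B^T *m B) -> (0 < sig)%R ->
  subdiff f s1 (- (B^T *m (p + sig *: (B *m s1 + q))))%R ->
  subdiff f s2 (- (B^T *m (p + sig *: (B *m s2 + q))))%R -> s1 = s2.
Proof.
move=> [_ [Spsd [_ Smono]]] pd s0 H1 H2.
have dom1 : dom f s1 by case: H1 => /finR [r e] _; rewrite /dom /= e ltry.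
have dom2 : dom f s2 by case: H2 => /finR [r e] _; rewrite /dom /= e ltry.
have := Smono _ _ _ _ dom1 dom2 H1 H2.
rewrite (ipBl (- _)) !ipNl !ip_mul !trmxK.
set d := (s1 - s2)%R.
rewrite [B *m d]mulmxBr.
set Bd := (B *m s1 - B *m s2)%R.
rewrite !(ipDl p) !ipZl !(ipDl (B *m _)).
have -> : (ip (B *m s1) Bd = sqnorm Bd + ip (B *m s2) Bd)%R.
  by rewrite /sqnorm /Bd ipBl; lra.
have := sqnorm_ge0 Bd; have := Spsd d => h1 h2 h3.
have e1 : ip d (Sig *m d) = 0%R by nra.
have e2 : sqnorm Bd = 0%R by nra.
apply/eqP; rewrite -subr_eq0; apply/negPn/negP => dn0.
have := pd d dn0; rewrite mulmxDl ipDr e1 add0r -mulmxA -ip_mul.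
by rewrite (_ : B *m d = Bd) ?mulmxBr // -/(sqnorm Bd) e2 ltxx.
Qed.

Lemma refl_nonexp {n} (sig : R) (w w' u u' : 'cV[R]_n) : (0 < sig)%R ->
  (0 <= ip (u - u') (w - w'))%R ->
  (sqnorm ((w - sig *: u) - (w' - sig *: u')) <=
   sqnorm ((w + sig *: u) - (w' + sig *: u')))%R.
Proof.
move=> s0 H.
have -> : ((w - sig *: u) - (w' - sig *: u') = (w - w') - sig *: (u - u'))%R.
  by apply/matrixP => i j; rewrite !mxE; ring.
have -> : ((w + sig *: u) - (w' + sig *: u') = (w - w') + sig *: (u - u'))%R.
  by apply/matrixP => i j; rewrite !mxE; ring.
rewrite (sqnormB (w - w')) (sqnormD (w - w')) ipZr (ipC (w - w')); nra.
Qed.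
End Conv.
Section Shift.
Context {R : realType}.
Local Open Scope ereal_scope.
Lemma argmin_shift {n} (F : 'cV[R]_n -> \bar R) (C : \bar R) (G : 'cV[R]_n -> R) x :
  C \is a fin_num -> is_argmin (fun z => C + F z + (G z)%:E) x ->
  forall z, F x + (G x)%:E <= F z + (G z)%:E.
Proof. by move=> Cf H z; have := H z; rewrite -!addeA leeD2lE. Qed.

Lemma argmin_fin {n} (F : 'cV[R]_n -> \bar R) (G : 'cV[R]_n -> R) x :
  properf F -> (forall z, F x + (G x)%:E <= F z + (G z)%:E) -> F x \is a fin_num.
Proof.
move=> [Hninf [z0 Hz0]] H; rewrite fin_numE -ltNye Hninf /=.
have := H z0; case: (F x) => //; case: (F z0) Hz0 => //.
Qed.
End Shift.

Section Main.
Context (R : realType) (nx ny nz : nat)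
  (f1 : 'cV[R]_ny -> \bar R) (f2 : 'cV[R]_nz -> \bar R)
  (B1 : 'M[R]_(nx, ny)) (B2 : 'M[R]_(nx, nz)) (c : 'cV[R]_nx)
  (Sig1 : 'M[R]_ny) (Sig2 : 'M[R]_nz)
  (Hf1 : proper_closed_convex f1) (Hf2 : proper_closed_convex f2)
  (HS1 : is_sigma_mod f1 Sig1) (HS2 : is_sigma_mod f2 Sig2)
  (HA2 : Assumption2 B1 B2 Sig1 Sig2)
  (y0 : 'cV[R]_ny) (x0 : 'cV[R]_nx) (sigma : R)
  (Hy0 : dom f1 y0) (Hsigma : 0 < sigma)
  (y : nat -> 'cV[R]_ny) (s : nat -> 'cV[R]_nz)
  (xB xh xhalf : nat -> 'cV[R]_nx)
  (HB : AlgorithmB f1 f2 B1 B2 c y0 x0 sigma y s xB xh xhalf)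
  (sA : nat -> 'cV[R]_nz) (yA : nat -> 'cV[R]_ny)
  (w x v eta : nat -> 'cV[R]_nx)
  (HA : AlgorithmA f1 f2 B1 B2 c y0 x0 sigma sA yA w x v eta).

Definition IH k := eta k = xh k + sigma *: (B1 *m y k - c) /\ f1 (y k) \is a fin_num.

Lemma IH0 : IH 0.
Proof.
have [ey0 [_ [exh0 _]]] := HB; have [_ [_ [eeta0 _]]] := HA.
split; first by rewrite eeta0 exh0 ey0.
rewrite ey0 fin_numE; case: Hf1 => [[Hn _] _]; rewrite -ltNye Hn /=.
by move: Hy0; rewrite /dom /=; case: (f1 y0).
Qed.

Lemma half2 : 2 * (sigma / 2) = sigma.
Proof. by rewrite mulrC divfK // pnatr_eq0. Qed.

Definition Step k :=
  sA k.+1 = s k.+1 /\ yA k.+1 = y k.+1 /\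
  w k.+1 = eta k + sigma *: (B2 *m s k.+1) /\
  x k.+1 = eta k + sigma *: (B1 *m y k.+1 - c) + (2 * sigma) *: (B2 *m s k.+1) /\
  v k.+1 = eta k + (2 * sigma) *: (B1 *m y k.+1 + B2 *m s k.+1 - c) /\
  subdiff f2 (s k.+1) (- (B2^T *m w k.+1)) /\
  subdiff f1 (y k.+1) (- (B1^T *m x k.+1)) /\ IH k.+1.

Lemma step k : IH k -> Step k.
Proof.
move=> [IHe IHf].
have [ey0 [_ [exh0 HBk]]] := HB; have [eyA0 [_ [eeta0 HAk]]] := HA.
have [Bs [Bhalf [By [BxB Bxh]]]] := HBk k.
have [As [Aw [Ay [Ax [Av Aeta]]]]] := HAk k.
have [pf1 [cf1 _]] := Hf1; have [pf2 [cf2 _]] := Hf2.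
have Bs' : forall z, (f2 (s k.+1) + (ip (xh k) (B2 *m s k.+1 + (B1 *m y k - c))
     + sigma / 2 * sqnorm (B2 *m s k.+1 + (B1 *m y k - c)))%:E <=
   f2 z + (ip (xh k) (B2 *m z + (B1 *m y k - c))
     + sigma / 2 * sqnorm (B2 *m z + (B1 *m y k - c)))%:E)%E.
  move=> z; have e : forall z, B1 *m y k + B2 *m z - c = B2 *m z + (B1 *m y k - c).
    by move=> z'; rewrite [B1 *m y k + _]addrC addrA.
  have := argmin_shift IHf (F := f2)
    (G := fun z => ip (xh k) (B1 *m y k + B2 *m z - c)
                   + sigma / 2 * sqnorm (B1 *m y k + B2 *m z - c)) Bs z.
  by rewrite !e.
have fs : f2 (s k.+1) \is a fin_num := argmin_fin pf2 Bs'.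
have sgB := argmin_sub cf2 pf2.1 fs (ltW (divr_gt0 Hsigma (ltr0Sn _ 1))) Bs'.
rewrite half2 in sgB.
have As' : forall z, (f2 (sA k.+1) + (ip (eta k) (B2 *m sA k.+1 + 0)
     + sigma / 2 * sqnorm (B2 *m sA k.+1 + 0))%:E <=
   f2 z + (ip (eta k) (B2 *m z + 0) + sigma / 2 * sqnorm (B2 *m z + 0))%:E)%E.
  by move=> z; rewrite !addr0; exact: As z.
have fsA := argmin_fin pf2 As'.
have sgA := argmin_sub cf2 pf2.1 fsA (ltW (divr_gt0 Hsigma (ltr0Sn _ 1))) As'.
rewrite half2 in sgA.
have sgB' : subdiff f2 (s k.+1) (- (B2^T *m (eta k + sigma *: (B2 *m s k.+1 + 0)))).
  suff -> : eta k + sigma *: (B2 *m s k.+1 + 0) =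
     xh k + sigma *: (B2 *m s k.+1 + (B1 *m y k - c)) by [].
  by rewrite IHe; apply/matrixP => i j; rewrite !mxE; ring.
have esA := argmin_uniq HS2 HA2.2 Hsigma sgB' sgA.
rewrite -esA in Aw Ay Ax Av.
have sg2 : subdiff f2 (s k.+1) (- (B2^T *m w k.+1)) by rewrite Aw -[B2 *m _]addr0.
pose G (z : 'cV[R]_ny) := ip (xhalf k) (B1 *m z + (B2 *m s k.+1 - c))
        + sigma / 2 * sqnorm (B1 *m z + (B2 *m s k.+1 - c)).
have By2 : is_argmin (fun z => (f2 (s k.+1) + f1 z + (G z)%:E)%E) (y k.+1).
  move=> z; have := By z; rewrite /Lsig /G /= ![(f2 _ + f1 _)%E]addeC.
  by rewrite !addrA.
have By' := argmin_shift fs By2.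
have fy := argmin_fin pf1 By'.
have sgBy := argmin_sub cf1 pf1.1 fy (ltW (divr_gt0 Hsigma (ltr0Sn _ 1))) By'.
rewrite half2 in sgBy.
have fyA := argmin_fin pf1 Ay.
have sgAy := argmin_sub cf1 pf1.1 fyA (ltW (divr_gt0 Hsigma (ltr0Sn _ 1))) Ay.
rewrite half2 in sgAy.
have sgBy' : subdiff f1 (y k.+1) (- (B1^T *m ((eta k + (2 * sigma) *: (B2 *m s k.+1))
     + sigma *: (B1 *m y k.+1 - c)))).
  suff -> : (eta k + (2 * sigma) *: (B2 *m s k.+1)) + sigma *: (B1 *m y k.+1 - c) =
     xhalf k + sigma *: (B1 *m y k.+1 + (B2 *m s k.+1 - c)) by [].
  by rewrite Bhalf IHe; apply/matrixP => i j; rewrite !mxE; ring.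
have eyA := argmin_uniq HS1 HA2.1 Hsigma sgBy' sgAy.
rewrite -eyA in Ax Av.
have sg1 : subdiff f1 (y k.+1) (- (B1^T *m x k.+1)).
  suff -> : x k.+1 = (eta k + (2 * sigma) *: (B2 *m s k.+1)) + sigma *: (B1 *m y k.+1 - c)
    by [].
  by rewrite Ax; apply/matrixP => i j; rewrite !mxE; ring.
do 7 (split => //).
split => //.
rewrite Aeta Bxh BxB Bhalf Av IHe eeta0 exh0.
have hN : (k.+2%:R : R) = k.+1%:R + 1 by rewrite -natr1.
rewrite hN; have hN0 : (k.+1%:R + 1 : R) != 0 by rewrite natr1 pnatr_eq0.
apply/matrixP => i j; rewrite !mxE. field. done.
Qed.

Lemma sync k : IH k.
Proof. elim: k => [|k IHk]; first exact: IH0. by have [_ [_ [_ [_ [_ [_ [_ ]]]]]]] := step IHk. Qed.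

Lemma stepk k : Step k.
Proof. exact: step (sync k). Qed.

Context (etastar wstar : 'cV[R]_nx)
  (Hetastar : is_proj (fix_PR (M1op f1 B1 c) (M2op f2 B2) sigma) (eta 0%N) etastar)
  (Hwstar : is_resolvent (M2op f2 B2) sigma etastar wstar).

Lemma dualfix : exists (u1 u2 : 'cV[R]_nx), subdiff (conjB1 f1 B1) wstar u1 /\ subdiff (conjB2 f2 B2) wstar u2 /\ etastar = wstar + sigma *: u2 /\ u1 = - u2 - c.
Proof.
have [[w2 [w1 [R2 [[u Hu E1] E]]]] _] := Hetastar.
have ew2 : w2 = wstar := resolvent_uniq (g := conjB2 f2 B2) Hsigma R2 Hwstar.
have [u2 Hu2 E2] := Hwstar.
have [u1 Hu1 eu] := Hu.
subst w2 u.
have ew1 : w1 = wstar.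
  apply/matrixP => i j; move/matrixP: E => /(_ i j); rewrite !mxE => E; lra.
subst w1.
exists u1, u2; do 3 split => //.
apply/matrixP => i j; move/matrixP: E1 => /(_ i j); move/matrixP: E2 => /(_ i j).
rewrite !mxE => e2 e1; apply: (mulfI (lt0r_neq0 Hsigma)); nra.
Qed.

Lemma sq_conv {n} (l : R) (A B : 'cV[R]_n) : 0 <= l <= 1 ->
  sqnorm (l *: A + (1 - l) *: B) <= l * sqnorm A + (1 - l) * sqnorm B.
Proof.
move=> /andP[l0 l1]; rewrite sqnormD !sqnormZ ipZl ipZr.
have h : 0 <= l * (1 - l) by nra.
have := ip2_le A B; have := sqnorm_ge0 A; have := sqnorm_ge0 B.
rewrite !expr2; nra.
Qed.

Lemma Tnonexp k : sqnorm (v k.+1 - etastar) <= sqnorm (eta k - etastar).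
Proof.
have [u1 [u2 [Hu1 [Hu2 [Es Eu]]]]] := dualfix.
have [_ [_ [Ew [Ex [Ev [SG2 [SG1 _]]]]]]] := stepk k.
have sgc2 := conj_chain SG2; have sgc1 := conj_chain SG1.
have m2 := subdiff_mono sgc2 Hu2; have m1 := subdiff_mono sgc1 Hu1.
have n2 := refl_nonexp Hsigma m2.
have m1' : 0 <= ip ((- (B1 *m y k.+1) + c) - (u1 + c)) (x k.+1 - wstar).
  by rewrite (_ : (- (B1 *m y k.+1) + c) - (u1 + c) = - (B1 *m y k.+1) - u1) //;
     apply/matrixP => i j; rewrite !mxE; ring.
have n1 := refl_nonexp Hsigma m1'.
have -> : v k.+1 - etastar = (x k.+1 - sigma *: (- (B1 *m y k.+1) + c))
     - (wstar - sigma *: (u1 + c)).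
  by rewrite Ev Ex Es Eu; apply/matrixP => i j; rewrite !mxE; ring.
apply: le_trans n1 _.
have -> : (x k.+1 + sigma *: (- (B1 *m y k.+1) + c)) - (wstar + sigma *: (u1 + c))
   = (w k.+1 - sigma *: (- (B2 *m s k.+1))) - (wstar - sigma *: u2).
  by rewrite Ex Ew Eu; apply/matrixP => i j; rewrite !mxE; ring.
apply: le_trans n2 _.
rewrite le_eqVlt; apply/orP; left; apply/eqP; congr sqnorm.
by rewrite Ew Es; apply/matrixP => i j; rewrite !mxE; ring.
Qed.

Lemma bounded k : sqnorm (eta k - etastar) <= sqnorm (eta 0 - etastar).
Proof.
elim: k => [//|k IHk].
have [_ [_ [_ [_ [_ Aeta]]]]] := HA.2.2.2 k.
have hN0 : (k.+2%:R : R) != 0 by rewrite pnatr_eq0.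
have -> : eta k.+1 - etastar = (k.+2%:R^-1) *: (eta 0 - etastar)
            + (1 - k.+2%:R^-1) *: (v k.+1 - etastar).
  rewrite Aeta; have hN : (k.+2%:R : R) = k.+1%:R + 1 by rewrite -natr1.
  rewrite hN in hN0 *; apply/matrixP => i j; rewrite !mxE; field => //.
have l0 : 0 <= (k.+2%:R : R)^-1 <= 1.
  by rewrite invr_ge0 ler0n /= invf_le1 ?ltr0Sn // ler1n.
apply: le_trans (sq_conv _ _ l0) _.
have := le_trans (Tnonexp k) IHk; case/andP: l0.
set L := (k.+2%:R : R)^-1 => L0 L1 H.
have : (1 - L) * sqnorm (v k.+1 - etastar) <= (1 - L) * sqnorm (eta 0 - etastar).
  by rewrite ler_wpM2l // subr_ge0.
lra.
Qed.

Context (ystar : 'cV[R]_ny) (sstar : 'cV[R]_nz)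
  (Hylim : cvg_vec y ystar) (Hslim : cvg_vec s sstar).

Definition rr k := B1 *m y k + B2 *m s k - c.
Definition rs := B1 *m ystar + B2 *m sstar - c.

Lemma sqnormD2 {n} (a b : 'cV[R]_n) : sqnorm (a + b) <= 2 * sqnorm a + 2 * sqnorm b.
Proof. rewrite sqnormD; have := ip2_le a b; lra. Qed.

Lemma mxK_ge0 {m n} (A : 'M[R]_(m, n)) : 0 <= \sum_(i < m) sqnorm ((row i A)^T).
Proof. by apply: sumr_ge0 => i _; exact: sqnorm_ge0. Qed.

Lemma lin_small {m n} (A : 'M[R]_(m, n)) (u : nat -> 'cV[R]_n) l :
  cvg_vec u l -> forall d, 0 < d ->
  exists N, forall k, (N <= k)%N -> 2 * sqnorm (A *m (u k - l)) < d.
Proof.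
move=> H d d0; set K := \sum_(i < m) sqnorm ((row i A)^T).
have K0 : 0 <= K := mxK_ge0 A.
have p : 0 < 2 * (K + 1) by lra.
have [N HN] := cvg_sq _ _ H _ (divr_gt0 d0 p).
exists N => k /HN; rewrite ltr_pdivlMr // => Hk.
have := mx_bound A (u k - l); have := sqnorm_ge0 (u k - l); rewrite -/K => h1 h2.
nra.
Qed.

Lemma rconv d : 0 < d -> exists N, forall k, (N <= k)%N -> sqnorm (rr k - rs) < d.
Proof.
move=> d0.
have [N1 H1] := lin_small B1 Hylim (divr_gt0 d0 (ltr0Sn _ 1)).
have [N2 H2] := lin_small B2 Hslim (divr_gt0 d0 (ltr0Sn _ 1)).
exists (maxn N1 N2) => k Hk.
have -> : rr k - rs = B1 *m (y k - ystar) + B2 *m (s k - sstar).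
  by rewrite /rr /rs !mulmxBr; apply/matrixP => i j; rewrite !mxE; ring.
apply: le_lt_trans (sqnormD2 _ _) _.
have := H1 k (leq_trans (leq_maxl _ _) Hk); have := H2 k (leq_trans (leq_maxr _ _) Hk).
lra.
Qed.

Lemma sq_lb (t q : R) : 0 < q -> t * t <= q / 2 * (q / 2) -> - (q / 2) <= t.
Proof. move=> q0 h; nra. Qed.

Lemma sq_abs (t M : R) : t ^+ 2 <= M -> t <= M + 1 /\ - t <= M + 1.
Proof. move=> h; split; nra. Qed.

Lemma rstar0 : rs = 0.
Proof.
apply/eqP; apply/negPn/negP => rs0.
set q := sqnorm rs.
have hqq : sqnorm rs = q by [].
have q0 : 0 < q.
  rewrite lt_def sqnorm_ge0 andbT; apply/negP => /eqP /sqnorm_eq0 /eqP; exact/negP.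
have q4 : 0 < q / 4 by lra.
have [N1 HN1] := rconv q4.
have ipbig : forall k, (N1 <= k)%N -> q / 2 <= ip (rr k) rs.
  move=> k /HN1 h.
  have -> : rr k = (rr k - rs) + rs by rewrite subrK.
  rewrite ipDl (_ : ip rs rs = q) //.
  have := CS (rr k - rs) rs; rewrite -/q => hc.
  have hq : sqnorm (rr k - rs) * q <= q / 4 * q.
    by rewrite ler_pM2r // ltW.
  have : ip (rr k - rs) rs ^+ 2 <= (q / 2) ^+ 2.
    apply: le_trans hc _; apply: le_trans hq _; rewrite expr2.
    by rewrite le_eqVlt; apply/orP; left; apply/eqP; field.
  move=> h2; suff : - (q / 2) <= ip (rr k - rs) rs by lra.
  by rewrite !expr2 in h2; apply: sq_lb.
clearbody q.
pose rho k := ip (eta k) rs.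
pose E := 2 * sqnorm (eta 0 - etastar) + 2 * sqnorm etastar.
have hE : E = 2 * sqnorm (eta 0 - etastar) + 2 * sqnorm etastar by [].
clearbody E.
have E0 : 0 <= E by rewrite hE; have := sqnorm_ge0 (eta 0 - etastar); have := sqnorm_ge0 etastar; lra.
pose Bd := E * q + 1.
have hBd : Bd = E * q + 1 by [].
clearbody Bd.
have Bd1 : 1 <= Bd by rewrite hBd; have := mulr_ge0 E0 (ltW q0); lra.
have rhob : forall k, rho k <= Bd /\ - rho k <= Bd.
  move=> k; rewrite hBd; apply: sq_abs.
  apply: le_trans (CS _ _) _; rewrite hqq ler_wpM2r ?(ltW q0) //.
  have -> : eta k = (eta k - etastar) + etastar by rewrite subrK.
  apply: le_trans (sqnormD2 _ _) _; have := bounded k; rewrite hE; lra.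
have rec : forall k, k.+2%:R * rho k.+1 =
    rho 0%N + k.+1%:R * (rho k + 2 * sigma * ip (rr k.+1) rs).
  move=> k; have [_ [_ [_ [_ [Ev _]]]]] := stepk k.
  have [_ [_ [_ [_ [_ Aeta]]]]] := HA.2.2.2 k.
  rewrite /rho Aeta Ev ipDl !ipZl ipDl ipZl -/(rr k.+1).
  have hN : (k.+2%:R : R) = k.+1%:R + 1 by rewrite -natr1.
  have hN0 : (k.+1%:R + 1 : R) != 0 by rewrite natr1 pnatr_eq0.
  rewrite hN; field => //.
pose D k := k.+1%:R * rho k.
have Db : forall k, D k <= k.+1%:R * Bd /\ - (k.+1%:R * Bd) <= D k.
  move=> k; have [h1 h2] := rhob k; have hk : (0 : R) <= k.+1%:R by [].
  rewrite /D; split; nra.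
have sq0 : 0 < sigma * q by rewrite mulr_gt0.
have A0 : 0 <= (4 * Bd + 1) / (sigma * q) by rewrite divr_ge0 // ?ltW //; lra.
set N2 := Num.Def.archi_bound ((4 * Bd + 1) / (sigma * q)).
have HN2 : (4 * Bd + 1) / (sigma * q) < N2%:R := archi_boundP A0.
set N := maxn N1 N2.
have grow : forall k, (N <= k)%N -> D k + (3 * Bd + 1) <= D k.+1.
  move=> k Hk.
  have ip1 := ipbig k.+1 (leq_trans (leq_maxl _ _) (leq_trans Hk (leqnSn _))).
  have k2 : (N2 <= k.+1)%N := leq_trans (leq_maxr _ _) (leq_trans Hk (leqnSn _)).
  have kN : (N2%:R : R) <= k.+1%:R by rewrite ler_nat.
  have big : 4 * Bd + 1 < sigma * q * k.+1%:R.
    have := lt_le_trans HN2 kN; rewrite ltr_pdivrMr //; lra.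
  have e : D k.+1 = rho 0%N + D k + 2 * sigma * k.+1%:R * ip (rr k.+1) rs.
    by rewrite /D rec; ring.
  have [_ h0] := rhob 0%N.
  rewrite e.
  have : sigma * q * k.+1%:R <= 2 * sigma * k.+1%:R * ip (rr k.+1) rs.
    have hk : (0 : R) <= k.+1%:R by [].
    have : 0 <= 2 * sigma * k.+1%:R by rewrite !mulr_ge0 // ltW.
    nra.
  lra.
have iter : forall m, D N + m%:R * (3 * Bd + 1) <= D (N + m)%N.
  elim => [|m IHm]; first by rewrite mul0r addr0 addn0.
  rewrite addnS; apply: le_trans (grow _ (leq_addr _ _)).
  rewrite -natr1 mulrDl mul1r; lra.
have A1 : 0 <= 2 * N.+1%:R * Bd by rewrite !mulr_ge0 //; lra.
set m := Num.Def.archi_bound (2 * N.+1%:R * Bd).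
have Hm : 2 * N.+1%:R * Bd < m%:R := archi_boundP A1.
have := iter m; have [hu _] := Db (N + m)%N; have [_ hl] := Db N.
rewrite -addSn natrD in hu; move=> h2.
have hm0 : (0 : R) <= m%:R by [].
have : m%:R <= m%:R * (2 * Bd + 1) by rewrite ler_peMr //; lra.
nra.
Qed.

Lemma conj_val {m} (f : 'cV[R]_m -> \bar R) (B : 'M[R]_(nx, m)) (u : 'cV[R]_nx) z F :
  subdiff f z (- (B^T *m u)) -> f z = F%:E ->
  fconj f (- (B^T *m u)) = (- ip u (B *m z) - F)%:E.
Proof.
move=> H eF; rewrite (fconj_sub H) eF -EFinB ipNl ip_mul trmxK.
by [].
Qed.

Lemma perk k u1 u2 C1 C2 : subdiff (conjB1 f1 B1) wstar u1 ->
  subdiff (conjB2 f2 B2) wstar u2 ->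
  conjB1 f1 B1 wstar = C1%:E -> conjB2 f2 B2 wstar = C2%:E ->
  exists F1 F2, f1 (y k.+1) = F1%:E /\ f2 (s k.+1) = F2%:E /\
  conjB1 f1 B1 (x k.+1) = (- ip (x k.+1) (B1 *m y k.+1) - F1)%:E /\
  conjB2 f2 B2 (w k.+1) = (- ip (w k.+1) (B2 *m s k.+1) - F2)%:E /\
  C1 + ip u1 (x k.+1 - wstar) <= - ip (x k.+1) (B1 *m y k.+1) - F1 /\
  C2 + ip u2 (w k.+1 - wstar) <= - ip (w k.+1) (B2 *m s k.+1) - F2.
Proof.
move=> Hu1 Hu2 eC1 eC2.
have [_ [_ [Ew [Ex [Ev [SG2 [SG1 _]]]]]]] := stepk k.
have [F1 eF1] := finR SG1.1; have [F2 eF2] := finR SG2.1.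
have e1 := conj_val SG1 eF1; have e2 := conj_val SG2 eF2.
exists F1, F2; do 4 (split => //).
split.
  by have := Hu1.2 (x k.+1); rewrite eC1 /conjB1 e1 -EFinD lee_fin.
by have := Hu2.2 (w k.+1); rewrite eC2 /conjB2 e2 -EFinD lee_fin.
Qed.

Lemma vid1 {n} (eta0 Y S c0 u2 ws : 'cV[R]_n) (sg : R) :
  - ip (- u2 - c0) ((eta0 + sg *: (Y - c0) + (2 * sg) *: S) - ws)
  - ip u2 ((eta0 + sg *: S) - ws)
  - ip (eta0 + sg *: (Y - c0) + (2 * sg) *: S) Y - ip (eta0 + sg *: S) S
  = - ip ws c0 + ip (sg *: u2 - eta0) (Y + S - c0) - sg * sqnorm (Y + S - c0).
Proof.
rewrite /sqnorm /ip -!sumrN !mulr_sumr -!sumrN -!big_split /=.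
by apply: eq_bigr => i _; rewrite !mxE; ring.
Qed.

Lemma split_lt (X Y : \bar R) (t : R) : (-oo < X)%E -> (-oo < Y)%E -> (t%:E < X + Y)%E ->
  exists a1 a2 : R, (a1%:E < X)%E /\ (a2%:E < Y)%E /\ t < a1 + a2.
Proof.
case: X => [xx||] //; case: Y => [yy||] // _ _.
- rewrite -EFinD lte_fin => h; exists (xx - (xx + yy - t) / 3), (yy - (xx + yy - t) / 3).
  rewrite !lte_fin; split; last split; lra.
- move=> _; exists (xx - 1), (t - xx + 2); rewrite !lte_fin ltry; split; last split; rewrite ?ltry //; lra.
- move=> _; exists (t - yy + 2), (yy - 1); rewrite !lte_fin ltry; split; last split; rewrite ?ltry //; lra.
- move=> _; exists t, 1; rewrite !ltry; split; last split; rewrite ?ltry //; lra.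
Qed.

Lemma sq_lt (t d : R) : 0 < d -> t * t < d * d -> t < d.
Proof. move=> d0 h; nra. Qed.

Lemma sqnormN {n} (u : 'cV[R]_n) : sqnorm (- u) = sqnorm u.
Proof. by rewrite /sqnorm ipNl ipNr opprK. Qed.

Lemma strong u1 u2 C1 C2 : subdiff (conjB1 f1 B1) wstar u1 ->
  subdiff (conjB2 f2 B2) wstar u2 ->
  conjB1 f1 B1 wstar = C1%:E -> conjB2 f2 B2 wstar = C2%:E ->
  etastar = wstar + sigma *: u2 -> u1 = - u2 - c ->
  exists P1 P2, f1 ystar = P1%:E /\ f2 sstar = P2%:E /\
    P1 + P2 = - (C1 + ip wstar c + C2).
Proof.
move=> Hu1 Hu2 eC1 eC2 Es Eu.
pose Dst := C1 + ip wstar c + C2.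
have hD : Dst = C1 + ip wstar c + C2 by [].
clearbody Dst.
have [[ninf1 _] [_ lsc1]] := Hf1; have [[ninf2 _] [_ lsc2]] := Hf2.
have up : (f1 ystar + f2 sstar <= (- Dst)%:E)%E.
  rewrite leNgt; apply/negP => /(split_lt (ninf1 ystar) (ninf2 sstar)) [a1 [a2 [h1 [h2 h3]]]].
  have [d1 d10 Hd1] := lsc1 _ _ h1; have [d2 d20 Hd2] := lsc2 _ _ h2.
  have [Ny HNy] := Hylim d10; have [Ns HNs] := Hslim d20.
  pose dl := a1 + a2 + Dst; have hdl : dl = a1 + a2 + Dst by [].
  clearbody dl.
  have dl0 : 0 < dl by rewrite hdl; lra.
  pose KA := 2 * sqnorm (sigma *: u2 - etastar) + 2 * sqnorm (eta 0 - etastar).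
  have hKA : KA = 2 * sqnorm (sigma *: u2 - etastar) + 2 * sqnorm (eta 0 - etastar) by [].
  clearbody KA.
  have KA0 : 0 <= KA.
    by rewrite hKA; have := sqnorm_ge0 (sigma *: u2 - etastar);
       have := sqnorm_ge0 (eta 0 - etastar); lra.
  have dd0 : 0 < dl * dl / (KA + 1) by rewrite divr_gt0 ?mulr_gt0 //; lra.
  have [Nr HNr] := rconv dd0.
  pose k := maxn Ny (maxn Ns Nr).
  have kNy : (Ny <= k.+1)%N by rewrite leqW // leq_maxl.
  have kNs : (Ns <= k.+1)%N by rewrite leqW // (leq_trans (leq_maxl Ns Nr)) // leq_maxr.
  have kNr : (Nr <= k.+1)%N by rewrite leqW // (leq_trans (leq_maxr Ns Nr)) // leq_maxr.
  have [F1 [F2 [eF1 [eF2 [_ [_ [S1 S2]]]]]]] := perk k Hu1 Hu2 eC1 eC2.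
  have l1 := Hd1 _ (HNy _ kNy); rewrite eF1 lte_fin in l1.
  have l2 := Hd2 _ (HNs _ kNs); rewrite eF2 lte_fin in l2.
  have [_ [_ [Ew [Ex _]]]] := stepk k.
  have V := vid1 (eta k) (B1 *m y k.+1) (B2 *m s k.+1) c u2 wstar sigma.
  rewrite -Ex -Ew -Eu -/(rr k.+1) in V.
  have hr := HNr _ kNr; rewrite rstar0 subr0 in hr.
  have hA : sqnorm (sigma *: u2 - eta k) <= KA.
    have -> : sigma *: u2 - eta k = (sigma *: u2 - etastar) + - (eta k - etastar).
      by apply/matrixP => i j; rewrite !mxE; ring.
    apply: le_trans (sqnormD2 _ _) _; rewrite sqnormN hKA; have := bounded k; lra.
  have hip : ip (sigma *: u2 - eta k) (rr k.+1) < dl.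
    apply: sq_lt => //; rewrite -expr2; apply: le_lt_trans (CS _ _) _.
    have hr0 := sqnorm_ge0 (rr k.+1).
    have : sqnorm (rr k.+1) * (KA + 1) < dl * dl by rewrite -ltr_pdivlMr //; lra.
    have := sqnorm_ge0 (sigma *: u2 - eta k); nra.
  have := sqnorm_ge0 (rr k.+1); have := mulr_ge0 (ltW Hsigma) (sqnorm_ge0 (rr k.+1)).
  lra.
have [P1 eP1] : exists P1 : R, f1 ystar = P1%:E.
  move: up (ninf1 ystar) (ninf2 sstar); case: (f1 ystar) => [r||] //; first by exists r.
  by case: (f2 sstar).
have [P2 eP2] : exists P2 : R, f2 sstar = P2%:E.
  move: up (ninf2 sstar); rewrite eP1; case: (f2 sstar) => [r||] //; by exists r.
exists P1, P2; split => //; split => //.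
move: up; rewrite eP1 eP2 -EFinD lee_fin hD => up.
have lb1 := fconj_lb f1 (- (B1^T *m wstar)) ystar.
have lb2 := fconj_lb f2 (- (B2^T *m wstar)) sstar.
rewrite -/(conjB1 f1 B1 wstar) eC1 eP1 -EFinB lee_fin in lb1.
rewrite -/(conjB2 f2 B2 wstar) eC2 eP2 -EFinB lee_fin in lb2.
rewrite !ipNl !ip_mul !trmxK in lb1 lb2.
have e0 := rstar0; rewrite /rs in e0.
have : ip wstar (B1 *m ystar + B2 *m sstar - c) = 0 by rewrite e0 ip0r.
rewrite ipBr ipDr; lra.
Qed.

Lemma vid2 {n} (eta0 Y S c0 : 'cV[R]_n) (sg : R) :
  4%:R * sg * (ip (eta0 + sg *: (Y - c0) + (2 * sg) *: S) (Y - c0) + ip (eta0 + sg *: S) S)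
  + (sqnorm (eta0 - (eta0 + (2 * sg) *: (Y + S - c0)))
     + 2%:R * ip (eta0 - (eta0 + (2 * sg) *: (Y + S - c0))) (eta0 + (2 * sg) *: (Y + S - c0)))
  = 0.
Proof.
rewrite /sqnorm /ip !mulr_sumr -!big_split /= !mulr_sumr -!big_split /=.
transitivity (\sum_(i < n) (0 : R)); last by rewrite big1.
by apply: eq_bigr => i _; rewrite !mxE; ring.
Qed.

Lemma vid3 {n} (eta0 Y S c0 u2 ws : 'cV[R]_n) (sg : R) :
  4%:R * sg * (- ip (- u2 - c0) ((eta0 + sg *: (Y - c0) + (2 * sg) *: S) - ws)
  - ip u2 ((eta0 + sg *: S) - ws)
  - ip (eta0 + sg *: (Y - c0) + (2 * sg) *: S) Y - ip (eta0 + sg *: S) S + ip ws c0)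
  = sqnorm (eta0 - sg *: u2) - sqnorm (eta0 + (2 * sg) *: (Y + S - c0) - sg *: u2).
Proof.
rewrite /sqnorm /ip -!sumrN -!big_split /= mulr_sumr.
by apply: eq_bigr => i _; rewrite !mxE; ring.
Qed.

Lemma final k :
    ((4%:R * sigma)%:E * hfun f1 f2 ystar sstar (y k.+1) (s k.+1) =
       - ((4%:R * sigma)%:E *
          (d_f1 f1 B1 c (x k.+1) + d_f2 f2 B2 (w k.+1)
           - d_f1 f1 B1 c wstar - d_f2 f2 B2 wstar))
       + (sqnorm (eta k - v k.+1) + 2%:R * ip (eta k - v k.+1) (v k.+1))%:E)%E
    /\
    ((4%:R * sigma)%:E * hfun f1 f2 ystar sstar (y k.+1) (s k.+1) <=
       (sqnorm (eta k - (etastar - wstar))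
        - sqnorm (v k.+1 - (etastar - wstar)))%:E)%E
    /\
    ((ip (B1 *m y k.+1 + B2 *m s k.+1 - c) (- wstar))%:E <=
       hfun f1 f2 ystar sstar (y k.+1) (s k.+1))%E.
Proof.
have [u1 [u2 [Hu1 [Hu2 [Es Eu]]]]] := dualfix.
have [C1 eC1] := finR Hu1.1; have [C2 eC2] := finR Hu2.1.
have [P1 [P2 [eP1 [eP2 hP]]]] := strong Hu1 Hu2 eC1 eC2 Es Eu.
have [F1 [F2 [eF1 [eF2 [eX [eW [S1 S2]]]]]]] := perk k Hu1 Hu2 eC1 eC2.
have [_ [_ [Ew [Ex [Ev _]]]]] := stepk k.
have lb1 := fconj_lb f1 (- (B1^T *m wstar)) (y k.+1).
have lb2 := fconj_lb f2 (- (B2^T *m wstar)) (s k.+1).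
rewrite -/(conjB1 f1 B1 wstar) eC1 eF1 -EFinB lee_fin in lb1.
rewrite -/(conjB2 f2 B2 wstar) eC2 eF2 -EFinB lee_fin in lb2.
rewrite !ipNl !ip_mul !trmxK in lb1 lb2.
rewrite /hfun /d_f1 /d_f2 eF1 eF2 eP1 eP2 eX eW eC1 eC2.
do 4 rewrite -?EFinD -?EFinB -?EFinM -?EFinN.
split; last split.
- congr EFin.
  have V := vid2 (eta k) (B1 *m y k.+1) (B2 *m s k.+1) c sigma.
  rewrite -Ex -Ew -Ev ipBr in V.
  have hP2 : P2 = - (C1 + ip wstar c + C2) - P1 by lra.
  rewrite hP2.
  have hsq : sqnorm (eta k - v k.+1) = - (4%:R * sigma * (ip (x k.+1) (B1 *m y k.+1)
      - ip (x k.+1) c + ip (w k.+1) (B2 *m s k.+1)))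
      - 2%:R * ip (eta k - v k.+1) (v k.+1) by lra.
  rewrite hsq; ring.
- rewrite lee_fin.
  have ep : etastar - wstar = sigma *: u2 by rewrite Es addrAC subrr add0r.
  rewrite ep.
  have V := vid3 (eta k) (B1 *m y k.+1) (B2 *m s k.+1) c u2 wstar sigma.
  rewrite -Ex -Ew -Ev -Eu in V.
  rewrite -V ler_pM2l ?mulr_gt0 //; lra.
- rewrite lee_fin ipNr (ipC _ wstar) ipBr ipDr; lra.
Qed.
End Main.


Unset Implicit Arguments. Set Strict Implicit.

Theorem lemma3p5 (R : realType) (nx ny nz : nat)
  (f1 : 'cV[R]_ny -> \bar R) (f2 : 'cV[R]_nz -> \bar R)
  (B1 : 'M[R]_(nx, ny)) (B2 : 'M[R]_(nx, nz)) (c : 'cV[R]_nx)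
  (Sig1 : 'M[R]_ny) (Sig2 : 'M[R]_nz)
  (Hf1 : proper_closed_convex f1) (Hf2 : proper_closed_convex f2)
  (HS1 : is_sigma_mod f1 Sig1) (HS2 : is_sigma_mod f2 Sig2)
  (HA1 : Assumption1 f1 f2 B1 B2 c) (HA2 : Assumption2 B1 B2 Sig1 Sig2)
  (y0 : 'cV[R]_ny) (x0 : 'cV[R]_nx) (sigma : R)
  (Hy0 : dom f1 y0) (Hsigma : 0 < sigma)
  (* Algorithm B *)
  (y : nat -> 'cV[R]_ny) (s : nat -> 'cV[R]_nz)
  (xB xh xhalf : nat -> 'cV[R]_nx)
  (HB : AlgorithmB f1 f2 B1 B2 c y0 x0 sigma y s xB xh xhalf)
  (ystar : 'cV[R]_ny) (sstar : 'cV[R]_nz)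
  (Hylim : cvg_vec y ystar) (Hslim : cvg_vec s sstar)
  (* Algorithm A *)
  (sA : nat -> 'cV[R]_nz) (yA : nat -> 'cV[R]_ny)
  (w x v eta : nat -> 'cV[R]_nx)
  (HA : AlgorithmA f1 f2 B1 B2 c y0 x0 sigma sA yA w x v eta)
  (* eta* = Pi_{Fix(T^PR_sigma)}(eta^0),  w* = J_{sigma M2}(eta* ) *)
  (etastar wstar : 'cV[R]_nx)
  (Hetastar : is_proj (fix_PR (M1op f1 B1 c) (M2op f2 B2) sigma)
                (eta 0%N) etastar)
  (Hwstar : is_resolvent (M2op f2 B2) sigma etastar wstar) :
  forall k : nat,
    ((4%:R * sigma)%:E * hfun f1 f2 ystar sstar (y k.+1) (s k.+1) =
       - ((4%:R * sigma)%:E *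
          (d_f1 f1 B1 c (x k.+1) + d_f2 f2 B2 (w k.+1)
           - d_f1 f1 B1 c wstar - d_f2 f2 B2 wstar))
       + (sqnorm (eta k - v k.+1) + 2%:R * ip (eta k - v k.+1) (v k.+1))%:E)%E
    /\
    ((4%:R * sigma)%:E * hfun f1 f2 ystar sstar (y k.+1) (s k.+1) <=
       (sqnorm (eta k - (etastar - wstar))
        - sqnorm (v k.+1 - (etastar - wstar)))%:E)%E
    /\
    ((ip (B1 *m y k.+1 + B2 *m s k.+1 - c) (- wstar))%:E <=
       hfun f1 f2 ystar sstar (y k.+1) (s k.+1))%E.
Proof.
move=> k.
exact: (final Hf1 Hf2 HS1 HS2 HA2 Hy0 Hsigma HB HA Hetastar Hwstar Hylim Hslim k).
Qed.
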